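(* (1) $\mathsf{WFT}_{\mathbb S}\le_W\mathsf T\mathsf C_{\mathbb N^\mathbb N}$ and $\mathsf{WFT}_{\mathbb S}\not\le_W\overline{\mathsf C_{\mathbb N^\mathbb N}}$. (2) $\mathsf{WFT}\le_W\mathsf C_{\mathbb N^\mathbb N}*\mathsf T\mathsf C_{\mathbb N^\mathbb N}$ and $\mathsf{WFT}\not\le_W\mathsf T\mathsf C_{\mathbb N^\mathbb N}$.
   Context: A problem $f:\subseteq X\rightrightarrows Y$ between represented spaces is a partial multi-valued map; $F\vdash f$ means $\delta_YF(p)\in f(\delta_X(p))$ whenever $\delta_X(p)\in\mathrm{dom}(f)$; $f\le_W g$ iff there are computable partial $H,K$ with $H\langle\mathrm{id},GK\rangle\vdash f$ for all $G\vdash g$. The compositional product $f*g$ is a problem representing the $\le_W$-maximum of $\{f_0\circ g_0:f_0\le_Wf,\ g_0\le_Wg\}$ (which exists). $\mathcal A_-(\mathbb N^\mathbb N)$ is the space of closed subsets of Baire space represented by $p\mapsto\mathbb N^\mathbb N\setminus\bigcup_nB_{p(n)}$ for a standard enumeration $(B_n)$ of basic open sets (including empty ones). $\mathsf C_{\mathbb N^\mathbb N}:\subseteq\mathcal A_-(\mathbb N^\mathbb N)\rightrightarrows\mathbb N^\mathbb N$, $A\mapsto A$, on nonempty $A$. $\mathsf{WFT}:\mathcal A_-(\mathbb N^\mathbb N)\to\{0,1\}$ gives $1$ iff $A=\emptyset$ ($\{0,1\}$ represented by $p\mapsto p(0)$), and $\mathsf{WFT}_{\mathbb S}$ is the same map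 with target Sierpiński space $\mathbb S=\{0,1\}$ represented by $\delta_{\mathbb S}(p)=0\iff p=000\dots$. For $p\in\mathbb{N}^\mathbb{N}$, $p-1$ is the concatenation of $p(0)-1,p(1)-1,\dots$ with $0-1$ the empty word; the completion of $(X,\delta_X)$ is $\overline X=X\cup\{\bot\}$ with $\delta_{\overline X}(p)=\delta_X(p-1)$ if $p-1$ is an infinite sequence in $\mathrm{dom}(\delta_X)$, $\bot$ otherwise. For $f:\subseteq X\rightrightarrows Y$: $\overline f:\overline X\rightrightarrows\overline Y$ equals $f$ on $\mathrm{dom}(f)$ and $\overline Y$ elsewhere; $\mathsf Tf:X\rightrightarrows Y$ equals $f$ on $\mathrm{dom}(f)$ and $Y$ elsewhere. *)

(* Defs.v *)
From Stdlib Require Import Arith List Cantor.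
Import ListNotations.

Definition Baire := nat -> nat.

(** A partial function F :⊆ N^N -> N^N is computable iff there is a program e
    with  F(p)(n) = Φ_e^p(n)  (an oracle Turing functional). *)
Inductive prog : Type :=
| PZero : prog
| PSucc : prog
| PProj : nat -> prog
| POracle : prog
| PComp : prog -> list prog -> prog
| PPrim : prog -> prog -> prog
| PMu : prog -> prog.

Inductive eval (p : Baire) : prog -> list nat -> nat -> Prop :=
| ev_zero : forall v, eval p PZero v 0
| ev_succ : forall x v, eval p PSucc (x :: v) (S x)
| ev_proj : forall i v, i < length v -> eval p (PProj i) v (nth i v 0)
| ev_oracle : forall x v, eval p POracle (x :: v) (p x)
| ev_comp : forall f gs v ws y,
    evals p gs v ws -> eval p f ws y -> eval p (PComp f gs) v y
| ev_prim0 : forall f g v y, eval p f v y -> eval p (PPrim f g) (0 :: v) y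
| ev_primS : forall f g n v y z,
    eval p (PPrim f g) (n :: v) y -> eval p g (n :: y :: v) z ->
    eval p (PPrim f g) (S n :: v) z
| ev_mu : forall f v n,
    eval p f (n :: v) 0 ->
    (forall m, m < n -> exists k, eval p f (m :: v) (S k)) ->
    eval p (PMu f) v n
with evals (p : Baire) : list prog -> list nat -> list nat -> Prop :=
| evs_nil : forall v, evals p [] v []
| evs_cons : forall g gs v y ys,
    eval p g v y -> evals p gs v ys -> evals p (g :: gs) v (y :: ys).

Definition computes (e : prog) (p q : Baire) : Prop :=
  forall n, eval p e [n] (q n).

Definition bpair (p q : Baire) : Baire :=
  fun n => if Nat.even n then p (Nat.div2 n) else q (Nat.div2 n).

Record RepSpace : Type := {
  rs_type :> Type;
  rs_delta : Baire -> rs_type -> Prop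
}.

Definition problem (X Y : RepSpace) := X -> Y -> Prop.
Definition pdom {X Y : RepSpace} (f : problem X Y) (x : X) : Prop := exists y, f x y.

Definition realizes {X Y : RepSpace} (F : Baire -> option Baire) (f : problem X Y) : Prop :=
  forall p x, rs_delta X p x -> pdom f x ->
    exists q, F p = Some q /\ exists y, rs_delta Y q y /\ f x y.

Definition Wred {X Y U V : RepSpace} (f : problem X Y) (g : problem U V) : Prop :=
  exists eH eK : prog,
    forall G : Baire -> option Baire, realizes G g ->
      forall p x, rs_delta X p x -> pdom f x ->
        exists k q r,
          computes eK p k /\ G k = Some q /\ computes eH (bpair p q) r /\
          exists y, rs_delta Y r y /\ f x y.

Definition pcomp {X Y Z : RepSpace} (f : problem Y Z) (g : problem X Y) : problem X Z :=
  fun x z => pdom g x /\ (forall y, g x y -> pdom f y) /\ exists y, g x y /\ f y z.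

(** f ≤_W g * h, where g * h is the ≤_W-maximum of
    {g0 ∘ h0 : g0 ≤_W g, h0 ≤_W h}; since the maximum is an element of that
    set, f ≤_W g*h iff f ≤_W g0∘h0 for some such g0, h0. *)
Definition Wred_cprod {X Y U1 V1 U2 V2 : RepSpace}
    (f : problem X Y) (g : problem U1 V1) (h : problem U2 V2) : Prop :=
  exists (A B Cs : RepSpace) (g0 : problem B Cs) (h0 : problem A B),
    Wred g0 g /\ Wred h0 h /\ Wred f (pcomp g0 h0).

Definition BaireS : RepSpace :=
  {| rs_type := Baire; rs_delta := fun p x => x = p |}.

(** Standard enumeration of finite words: decode is a surjection nat -> list nat *)
Fixpoint dec (fuel n : nat) : list nat :=
  match fuel with
  | 0 => []
  | S f => match n with
           | 0 => []
           | S m => let (a, b) := Cantor.of_nat m in a :: dec f b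
           end
  end.
Definition decode (n : nat) : list nat := dec (S n) n.

Fixpoint prefix_of (w : list nat) (x : Baire) (i : nat) : Prop :=
  match w with
  | [] => True
  | a :: w' => x i = a /\ prefix_of w' x (S i)
  end.

Definition basic (n : nat) (x : Baire) : Prop :=
  match n with
  | 0 => False
  | S m => prefix_of (decode m) x 0
  end.

(** A_-(N^N): p names N^N \ ⋃_n B_{p(n)}; closed sets are predicates *)
Definition ClosedS : RepSpace :=
  {| rs_type := Baire -> Prop;
     rs_delta := fun p A => A = (fun x => forall n, ~ basic (p n) x) |}.

Definition TwoS : RepSpace :=
  {| rs_type := bool;
     rs_delta := fun p b => p 0 = (if b then 1 else 0) |}.

Definition SierpS : RepSpace :=
  {| rs_type := bool;
     rs_delta := fun p b => if b then exists n, p n <> 0 else forall n, p n = 0 |}.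

(** p - 1: q is the infinite sequence p(n0)-1, p(n1)-1, ... where
    n0 < n1 < ... enumerates the n with p(n) <> 0 (the entries with p(n) = 0
    contribute the empty word).  [minus1 p q] holds iff p-1 is infinite and
    equals q. *)
Definition minus1 (p q : Baire) : Prop :=
  exists s : nat -> nat,
    (forall k, s k < s (S k)) /\
    (forall n, p n <> 0 <-> exists k, s k = n) /\
    (forall k, q k = p (s k) - 1).

(** completion: carrier option X, None = ⊥ *)
Definition Compl (X : RepSpace) : RepSpace :=
  {| rs_type := option X;
     rs_delta := fun p ox =>
       match ox with
       | Some x => exists q, minus1 p q /\ rs_delta X q x
       | None => ~ (exists q x, minus1 p q /\ rs_delta X q x)
       end |}.

Definition pbar {X Y : RepSpace} (f : problem X Y) : problem (Compl X) (Compl Y) :=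
  fun ox oy =>
    match ox with
    | Some x => match oy with Some y => (f x y \/ ~ pdom f x) | None => ~ pdom f x end
    | None => True
    end.

Definition ptot {X Y : RepSpace} (f : problem X Y) : problem X Y :=
  fun x y => f x y \/ ~ pdom f x.

Definition C_Baire : problem ClosedS BaireS := fun A x => A x.

Definition WFT : problem ClosedS TwoS :=
  fun A b => b = true <-> (forall x, ~ A x).

Definition WFT_S : problem ClosedS SierpS :=
  fun A b => b = true <-> (forall x, ~ A x).

(* Main.v *)
Require Import Defs.
From Stdlib Require Import Arith List Lia Cantor Classical ClassicalEpsilon FunctionalExtensionality.
Import ListNotations.


Section StrongInd.
Variable p : Baire.
Variable P : prog -> list nat -> nat -> Prop.
Variable Q : list prog -> list nat -> list nat -> Prop.
Hypothesis Hzero : forall v, P PZero v 0.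
Hypothesis Hsucc : forall x v, P PSucc (x :: v) (S x).
Hypothesis Hproj : forall i v, i < length v -> P (PProj i) v (nth i v 0).
Hypothesis Horacle : forall x v, P POracle (x :: v) (p x).
Hypothesis Hcomp : forall f gs v ws y, evals p gs v ws -> Q gs v ws ->
   eval p f ws y -> P f ws y -> P (PComp f gs) v y.
Hypothesis Hprim0 : forall f g v y, eval p f v y -> P f v y -> P (PPrim f g) (0 :: v) y.
Hypothesis HprimS : forall f g n v y z,
    eval p (PPrim f g) (n :: v) y -> P (PPrim f g) (n :: v) y ->
    eval p g (n :: y :: v) z -> P g (n :: y :: v) z ->
    P (PPrim f g) (S n :: v) z.
Hypothesis Hmu : forall f v n,
    eval p f (n :: v) 0 -> P f (n :: v) 0 ->
    (forall m, m < n -> exists k, eval p f (m :: v) (S k) /\ P f (m :: v) (S k)) ->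
    P (PMu f) v n.
Hypothesis Hnil : forall v, Q [] v [].
Hypothesis Hcons : forall g gs v y ys, eval p g v y -> P g v y -> evals p gs v ys -> Q gs v ys ->
   Q (g :: gs) v (y :: ys).

Fixpoint eval_sind e v y (H : eval p e v y) {struct H} : P e v y
with evals_sind gs v ws (H : evals p gs v ws) {struct H} : Q gs v ws.
Proof.
  - destruct H.
    + apply Hzero.
    + apply Hsucc.
    + apply Hproj; assumption.
    + apply Horacle.
    + eapply Hcomp; eauto.
    + apply Hprim0; auto.
    + eapply HprimS; eauto.
    + apply Hmu; auto. intros m Hm. destruct (H0 m Hm) as [k Hk].
      exists k. split; [exact Hk| exact (eval_sind _ _ _ Hk)].
  - destruct H.
    + apply Hnil.
    + apply Hcons; auto.
Qed.
End StrongInd.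

Lemma eval_det_all p :
  (forall e v y, eval p e v y -> forall y', eval p e v y' -> y = y').
Proof.
  intros e v y H.
  refine (eval_sind p (fun e v y => forall y', eval p e v y' -> y = y')
                     (fun gs v ws => forall ws', evals p gs v ws' -> ws = ws') _ _ _ _ _ _ _ _ _ _ e v y H); clear e v y H.
  - intros v y' H; inversion H; auto.
  - intros x v y' H; inversion H; auto.
  - intros i v _ y' H; inversion H; auto.
  - intros x v y' H; inversion H; auto.
  - intros f gs v ws y _ IH1 _ IH2 y' H; inversion H; subst.
    match goal with Hx : evals _ gs v _ |- _ => apply IH1 in Hx; subst end. auto.
  - intros f g v y _ IH y' H; inversion H; subst; auto.
  - intros f g n v y z _ IH1 _ IH2 y' H; inversion H; subst.
    match goal with Hx : eval _ (PPrim f g) (n :: v) _ |- _ => apply IH1 in Hx; subst end. auto.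
  - intros f v n _ IH0 IHlt y' H; inversion H; subst.
    destruct (lt_eq_lt_dec n y') as [[Hlt|Heq]|Hgt]; auto.
    + match goal with Hx : forall m, m < y' -> _ |- _ => destruct (Hx n Hlt) as [k Hk] end.
      apply IH0 in Hk. discriminate.
    + destruct (IHlt y' Hgt) as [k [Hk IHk]].
      match goal with Hx : eval _ f (y' :: v) 0 |- _ => apply IHk in Hx end. discriminate.
  - intros v ws' H; inversion H; auto.
  - intros g gs v y ys _ IH1 _ IH2 ws' H; inversion H; subst.
    f_equal; auto.
Qed.

Definition agree (o o' : Baire) (b : nat) := forall i, i < b -> o i = o' i.

Lemma agree_mono o o' b b' : b' <= b -> agree o o' b -> agree o o' b'.
Proof. unfold agree; intros; apply H0; lia. Qed.
Lemma agree_sym o o' b : agree o o' b -> agree o' o b.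
Proof. unfold agree; intros; symmetry; auto. Qed.
Lemma agree_trans o1 o2 o3 b : agree o1 o2 b -> agree o2 o3 b -> agree o1 o3 b.
Proof. unfold agree; intros; rewrite H; auto. Qed.

Ltac agr := match goal with Ha : agree ?o ?o' ?B |- agree ?o ?o' ?b => apply (agree_mono o o' B b); [lia|exact Ha] end.

Lemma eval_cont p e v y : eval p e v y ->
  exists b, forall p', agree p p' b -> eval p' e v y.
Proof.
  intros H.
  refine (eval_sind p (fun e v y => exists b, forall p', agree p p' b -> eval p' e v y)
                     (fun gs v ws => exists b, forall p', agree p p' b -> evals p' gs v ws) _ _ _ _ _ _ _ _ _ _ e v y H); clear e v y H.
  - intros v; exists 0; intros; constructor.
  - intros x v; exists 0; intros; constructor.
  - intros i v H; exists 0; intros; constructor; auto.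
  - intros x v; exists (S x); intros p' Ha. rewrite (Ha x) by lia. constructor.
  - intros f gs v ws y _ [b1 H1] _ [b2 H2]. exists (b1 + b2); intros p' Ha.
    eapply ev_comp; [apply H1|apply H2]; agr.
  - intros f g v y _ [b H]; exists b; intros; apply ev_prim0; auto.
  - intros f g n v y z _ [b1 H1] _ [b2 H2]. exists (b1 + b2); intros p' Ha.
    eapply ev_primS; [apply H1|apply H2]; agr.
  - intros f v n _ [b0 H0] IHlt.
    assert (HB : forall N, N <= n -> exists B, forall m, m < N -> exists k, forall p', agree p p' B -> eval p' f (m :: v) (S k)).
    { induction N; intros HN.
      - exists 0; intros; lia.
      - destruct (IHN ltac:(lia)) as [B HBm].
        destruct (IHlt N ltac:(lia)) as [k [_ [b Hb]]].
        exists (B + b); intros m Hm.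
        destruct (Nat.eq_dec m N) as [->|Hne].
        + exists k; intros p' Ha; apply Hb; agr.
        + destruct (HBm m ltac:(lia)) as [k' Hk']. exists k'; intros p' Ha; apply Hk'; agr. }
    destruct (HB n (le_n n)) as [B HBm].
    exists (b0 + B); intros p' Ha. constructor.
    + apply H0; agr.
    + intros m Hm. destruct (HBm m Hm) as [k Hk]. exists k. apply Hk; agr.
  - intros v; exists 0; intros; constructor.
  - intros g gs v y ys _ [b1 H1] _ [b2 H2]. exists (b1 + b2); intros p' Ha.
    constructor; [apply H1|apply H2]; agr.
Qed.


Lemma snd_of_nat_le m : snd (of_nat m) <= m.
Proof.
  pose proof (cancel_to_of m) as H. destruct (of_nat m) as [x y] eqn:E. simpl.
  pose proof (to_nat_non_decreasing x y). lia.
Qed.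

Lemma dec_fuel : forall f1 f2 n, n < f1 -> n < f2 -> dec f1 n = dec f2 n.
Proof.
  induction f1; intros f2 n H1 H2; [lia|].
  destruct f2; [lia|]. destruct n; [reflexivity|].
  simpl. pose proof (snd_of_nat_le n). destruct (of_nat n) as [a b]. simpl in *.
  f_equal. apply IHf1; lia.
Qed.

Lemma decode_S m : decode (S m) = fst (of_nat m) :: decode (snd (of_nat m)).
Proof.
  unfold decode. change (dec (S (S m)) (S m)) with (let (a,b) := of_nat m in a :: dec (S m) b).
  pose proof (snd_of_nat_le m). destruct (of_nat m) as [a b]; cbv beta iota in *. unfold fst, snd in *.
  f_equal. apply dec_fuel; lia.
Qed.

Fixpoint code (w : list nat) : nat :=
  match w with [] => 0 | a :: w' => S (to_nat (a, code w')) end.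

Lemma decode_code w : decode (code w) = w.
Proof.
  induction w as [|a w IH]; [reflexivity|].
  cbn [code]. rewrite decode_S, cancel_of_to. cbn [fst snd]. congruence.
Qed.

Lemma code_decode n : code (decode n) = n.
Proof.
  induction n as [n IH] using lt_wf_ind. destruct n; [reflexivity|].
  rewrite decode_S. cbn [code]. rewrite IH.
  - rewrite <- surjective_pairing. now rewrite cancel_to_of.
  - pose proof (snd_of_nat_le n); lia.
Qed.

Lemma prefix_of_iff w x i : prefix_of w x i <-> forall j, j < length w -> x (i + j) = nth j w 0.
Proof.
  revert i; induction w as [|a w IH]; intros i; simpl; split.
  - intros; lia.
  - auto.
  - intros [H1 H2] j Hj. destruct j. { rewrite Nat.add_0_r; auto. }
    apply IH with (j := j) in H2; [|lia]. rewrite <- H2. f_equal; lia.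
  - intros H. split. { specialize (H 0 ltac:(lia)). rewrite Nat.add_0_r in H; auto. }
    apply IH. intros j Hj. specialize (H (S j) ltac:(lia)). rewrite <- H. f_equal; lia.
Qed.

Definition pref (x : Baire) (n : nat) : list nat := map x (seq 0 n).

Lemma prefix_of_pref_iff w x : prefix_of w x 0 <-> w = pref x (length w).
Proof.
  rewrite prefix_of_iff. unfold pref. split.
  - intros H. apply nth_ext with (d := 0) (d' := 0).
    + rewrite length_map, length_seq; auto.
    + intros j Hj. rewrite (nth_indep (map x (seq 0 (length w))) 0 (x 0)) by (rewrite length_map, length_seq; auto).
      rewrite map_nth, seq_nth by auto. simpl. symmetry; apply H; auto.
  - intros E j Hj. rewrite E. rewrite (nth_indep (map x (seq 0 (length w))) 0 (x 0)) by (rewrite length_map, length_seq; lia).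
    rewrite map_nth, seq_nth by lia. reflexivity.
Qed.

Lemma pref_length x n : length (pref x n) = n.
Proof. unfold pref; rewrite length_map, length_seq; auto. Qed.

Lemma basic_S_iff m x : basic (S m) x <-> exists len, m = code (pref x len).
Proof.
  simpl. rewrite prefix_of_pref_iff. split.
  - intros H. exists (length (decode m)). rewrite <- H. now rewrite code_decode.
  - intros [len ->]. rewrite decode_code, pref_length. reflexivity.
Qed.

Definition ext (l : list nat) : Baire := fun i => nth i l 0.

Section FP.
Variable Psi : Baire -> nat -> list nat -> Prop.
Hypothesis Hinv : forall o o' b w, agree o o' b -> Psi o b w -> Psi o' b w.

Definition fval (m : nat) (l : list nat) : nat :=
  match fst (of_nat m) with
  | 0 => 0
  | S t => if excluded_middle_informative (exists b, b <= m /\ Psi (ext l) b (decode t)) then S t else 0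
  end.

Fixpoint fpre (m : nat) : list nat :=
  match m with 0 => [] | S m' => fpre m' ++ [fval m' (fpre m')] end.

Definition fpt : Baire := fun m => fval m (fpre m).

Lemma fpre_len m : length (fpre m) = m.
Proof. induction m; simpl; auto. rewrite length_app; simpl; lia. Qed.

Lemma fpre_agree m : agree (ext (fpre m)) fpt m.
Proof.
  induction m; intros i Hi; [lia|]. unfold ext; simpl.
  destruct (Nat.eq_dec i m) as [->|Hne].
  - rewrite app_nth2 by (rewrite fpre_len; lia). rewrite fpre_len, Nat.sub_diag. reflexivity.
  - rewrite app_nth1 by (rewrite fpre_len; lia). apply IHm; lia.
Qed.

Lemma fixpoint_prop z : (forall n, ~ basic (fpt n) z) <-> ~ (exists b w, Psi fpt b w /\ prefix_of w z 0).
Proof.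
  split.
  - intros H [b [w [HP Hw]]].
    set (t := code w). set (m := to_nat (S t, b)).
    apply (H m). unfold fpt, fval. unfold m at 1. rewrite cancel_of_to. simpl.
    destruct excluded_middle_informative as [_|Hn].
    + simpl. unfold t; rewrite decode_code; auto.
    + exfalso; apply Hn. exists b. split.
      * unfold m. pose proof (to_nat_non_decreasing (S t) b). lia.
      * unfold t; rewrite decode_code. apply (Hinv fpt); auto.
        apply agree_sym. apply (agree_mono _ _ m). { unfold m. pose proof (to_nat_non_decreasing (S t) b). lia. }
        apply fpre_agree.
  - intros H n Hb. unfold fpt, fval in Hb. destruct (fst (of_nat n)) as [|t]; [exact Hb|].
    destruct excluded_middle_informative as [[b [Hbn HP]]|_]; [|exact Hb].
    apply H. exists b, (decode t). split; [|exact Hb].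
    apply (Hinv (ext (fpre n))); auto.
    apply (agree_mono _ _ n); auto. apply fpre_agree.
Qed.
End FP.

Lemma fixpoint_exists (Psi : Baire -> nat -> list nat -> Prop) :
  (forall o o' b w, agree o o' b -> Psi o b w -> Psi o' b w) ->
  exists p : Baire, forall z, (forall n, ~ basic (p n) z) <-> ~ (exists b w, Psi p b w /\ prefix_of w z 0).
Proof. intros H. exists (fpt Psi). apply fixpoint_prop; auto. Qed.


Definition tot (o : Baire) (n : nat) (e : prog) (F : list nat -> nat) : Prop :=
  forall v, length v = n -> eval o e v (F v).

Lemma tot_ext o n e F G : tot o n e F -> (forall v, length v = n -> F v = G v) -> tot o n e G.
Proof. intros H E v Hv. rewrite <- E by auto. auto. Qed.

Lemma tot_zero o n : tot o n PZero (fun _ => 0).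
Proof. intros v _; constructor. Qed.
Lemma tot_succ o n : tot o (S n) PSucc (fun v => S (nth 0 v 0)).
Proof. intros [|x v] H; [discriminate|]. constructor. Qed.
Lemma tot_proj o n i : i < n -> tot o n (PProj i) (fun v => nth i v 0).
Proof. intros Hi v Hv. constructor. lia. Qed.
Lemma tot_oracle o n : tot o (S n) POracle (fun v => o (nth 0 v 0)).
Proof. intros [|x v] H; [discriminate|]. constructor. Qed.

Inductive totl (o : Baire) (n : nat) : list prog -> list (list nat -> nat) -> Prop :=
| totl_nil : totl o n [] []
| totl_cons g G gs Gs : tot o n g G -> totl o n gs Gs -> totl o n (g :: gs) (G :: Gs).

Lemma totl_evals o n gs Gs : totl o n gs Gs -> forall v, length v = n -> evals o gs v (map (fun G => G v) Gs).
Proof. induction 1; intros v Hv; simpl; constructor; auto. Qed.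

Lemma totl_len o n gs Gs : totl o n gs Gs -> length Gs = length gs.
Proof. induction 1; simpl; auto. Qed.

Lemma tot_comp o n m f F gs Gs : tot o m f F -> totl o n gs Gs -> length gs = m ->
  tot o n (PComp f gs) (fun v => F (map (fun G => G v) Gs)).
Proof.
  intros Hf Hg Hl v Hv. eapply ev_comp.
  - apply (totl_evals o n gs Gs); auto.
  - apply Hf. rewrite length_map. erewrite totl_len; eauto.
Qed.

Fixpoint prec (F : list nat -> nat) (G : list nat -> nat) (x : nat) (t : list nat) : nat :=
  match x with 0 => F t | S k => G (k :: prec F G k t :: t) end.

Lemma tot_prim o n f F g G : tot o n f F -> tot o (S (S n)) g G ->
  tot o (S n) (PPrim f g) (fun v => prec F G (nth 0 v 0) (tl v)).
Proof.
  intros Hf Hg [|x t] Hv; [discriminate|]. simpl in Hv. injection Hv as Hv. simpl.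
  induction x.
  - constructor. apply Hf; auto.
  - simpl. eapply ev_primS; [exact IHx|]. apply Hg. simpl; lia.
Qed.

Lemma tot_comp' o n m f F gs Gs : length gs = m -> tot o m f F -> totl o n gs Gs ->
  tot o n (PComp f gs) (fun v => F (map (fun G => G v) Gs)).
Proof. intros; eapply tot_comp; eauto. Qed.

Ltac T_known := fail.
Ltac T := first
  [ T_known
  | apply tot_zero | apply tot_succ | (apply tot_proj; lia) | apply tot_oracle
  | (eapply tot_comp'; [reflexivity | T | TLs])
  | (apply tot_prim; [T|T]) ]
with TLs := first [apply totl_nil | (eapply totl_cons; [T | TLs])].

Definition P_add := PPrim (PProj 0) (PComp PSucc [PProj 1]).
Lemma tot_add o : tot o 2 P_add (fun v => nth 0 v 0 + nth 1 v 0).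
Proof.
  eapply tot_ext.
  - T.
  - intros v Hv. destruct v as [|x [|y [|]]]; try discriminate. simpl.
    induction x; simpl; auto.
Qed.
Ltac T_known ::= first [apply tot_add].


Definition P_pred := PPrim PZero (PProj 0).
Lemma tot_pred o : tot o 1 P_pred (fun v => pred (nth 0 v 0)).
Proof.
  eapply tot_ext.
  - T.
  - intros v Hv. destruct v as [|x [|]]; try discriminate. destruct x; reflexivity.
Qed.
Ltac T_known ::= first [apply tot_add | apply tot_pred].


Definition P_subr := PPrim (PProj 0) (PComp P_pred [PProj 1]).
Definition P_sub := PComp P_subr [PProj 1; PProj 0].
Lemma tot_sub o : tot o 2 P_sub (fun v => nth 0 v 0 - nth 1 v 0).
Proof.
  eapply tot_ext.
  - T.
  - intros v Hv. destruct v as [|x [|y [|]]]; try discriminate. simpl.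
    clear Hv; induction y; simpl; [lia|]. rewrite IHy. lia.
Qed.
Ltac T_known ::= first [apply tot_add | apply tot_pred | apply tot_sub].


Definition P_isz := PPrim (PComp PSucc [PZero]) PZero.
Lemma tot_isz o : tot o 1 P_isz (fun v => if Nat.eqb (nth 0 v 0) 0 then 1 else 0).
Proof.
  eapply tot_ext.
  - T.
  - intros v Hv. destruct v as [|x [|]]; try discriminate. destruct x; reflexivity.
Qed.
Ltac T_known ::= first [apply tot_add | apply tot_pred | apply tot_sub | apply tot_isz].


Definition P_sg := PPrim PZero (PComp PSucc [PZero]).
Lemma tot_sg o : tot o 1 P_sg (fun v => if Nat.eqb (nth 0 v 0) 0 then 0 else 1).
Proof.
  eapply tot_ext.
  - T.
  - intros v Hv. destruct v as [|x [|]]; try discriminate. destruct x; reflexivity.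
Qed.
Ltac T_known ::= first [apply tot_add | apply tot_pred | apply tot_sub | apply tot_isz | apply tot_sg].


Definition P_eq := PComp P_isz [PComp P_add [P_sub; PComp P_sub [PProj 1; PProj 0]]].
Lemma tot_eq o : tot o 2 P_eq (fun v => if Nat.eqb (nth 0 v 0) (nth 1 v 0) then 1 else 0).
Proof.
  eapply tot_ext.
  - T.
  - intros v Hv. simpl. destruct (Nat.eqb (nth 0 v 0) (nth 1 v 0)) eqn:E.
    + apply Nat.eqb_eq in E. rewrite E. rewrite Nat.sub_diag. reflexivity.
    + apply Nat.eqb_neq in E. destruct (Nat.eqb _ 0) eqn:E2; auto. apply Nat.eqb_eq in E2. lia.
Qed.
Ltac T_known ::= first [apply tot_add | apply tot_pred | apply tot_sub | apply tot_isz | apply tot_sg | apply tot_eq].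


Fixpoint tri (n : nat) : nat := match n with 0 => 0 | S k => S k + tri k end.
Lemma to_nat_tri x y : to_nat (x, y) = y + tri (y + x).
Proof. reflexivity. Qed.

Definition P_T := PPrim PZero (PComp P_add [PProj 1; PComp PSucc [PProj 0]]).
Lemma tot_T o : tot o 1 P_T (fun v => tri (nth 0 v 0)).
Proof.
  eapply tot_ext.
  - T.
  - intros v Hv. destruct v as [|x [|]]; try discriminate. simpl. clear Hv; induction x; simpl; auto. rewrite IHx; lia.
Qed.
Ltac T_known ::= first [apply tot_add | apply tot_pred | apply tot_sub | apply tot_isz | apply tot_sg | apply tot_eq | apply tot_T].


Definition P_tonat := PComp P_add [PProj 1; PComp P_T [PComp P_add [PProj 1; PProj 0]]].
Lemma tot_tonat o : tot o 2 P_tonat (fun v => to_nat (nth 0 v 0, nth 1 v 0)).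
Proof.
  eapply tot_ext.
  - T.
  - intros v Hv. rewrite to_nat_tri. reflexivity.
Qed.
Ltac T_known ::= first [apply tot_add | apply tot_pred | apply tot_sub | apply tot_isz | apply tot_sg | apply tot_eq | apply tot_T | apply tot_tonat].



Ltac T_known ::= first [apply tot_add | apply tot_pred | apply tot_sub | apply tot_isz | apply tot_sg | apply tot_eq | apply tot_T | apply tot_tonat].

Definition P_q := PComp POracle [PComp PSucc [PComp P_add [PProj 0; PProj 0]]].
Lemma tot_q o : tot o 1 P_q (fun v => o (S (nth 0 v 0 + nth 0 v 0))).
Proof. eapply tot_ext; [T|]. intros v _. reflexivity. Qed.
Definition P_p := PComp POracle [PComp P_add [PProj 0; PProj 0]].
Lemma tot_p o : tot o 1 P_p (fun v => o (nth 0 v 0 + nth 0 v 0)).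
Proof. eapply tot_ext; [T|]. intros v _. reflexivity. Qed.
Ltac T_known ::= first [apply tot_add | apply tot_pred | apply tot_sub | apply tot_isz | apply tot_sg | apply tot_eq | apply tot_T | apply tot_tonat | apply tot_q | apply tot_p].

Fixpoint rcf (q : Baire) (len i : nat) : nat :=
  match i with 0 => 0 | S k => S (to_nat (q (len - S k), rcf q len k)) end.

Definition P_rc := PPrim PZero (PComp PSucc [PComp P_tonat [PComp P_q [PComp P_sub [PProj 2; PComp PSucc [PProj 0]]]; PProj 1]]).
Lemma tot_rc o : tot o 2 P_rc (fun v => rcf (fun j => o (S (j + j))) (nth 1 v 0) (nth 0 v 0)).
Proof.
  eapply tot_ext; [T|]. intros v Hv. destruct v as [|i [|len [|]]]; try discriminate.
  simpl. clear Hv; induction i; simpl; auto.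
Qed.
Ltac T_known ::= first [apply tot_add | apply tot_pred | apply tot_sub | apply tot_isz | apply tot_sg | apply tot_eq | apply tot_T | apply tot_tonat | apply tot_q | apply tot_p | apply tot_rc].

Definition tst (o : Baire) (i len : nat) : nat :=
  if Nat.eqb (o (i + i)) (S (rcf (fun j => o (S (j + j))) len len)) then 1 else 0.

Definition P_test := PComp P_eq [PComp P_p [PProj 0]; PComp PSucc [PComp P_rc [PProj 1; PProj 1]]].
Lemma tot_test o : tot o 2 P_test (fun v => tst o (nth 0 v 0) (nth 1 v 0)).
Proof. eapply tot_ext; [T|]. intros v Hv. reflexivity. Qed.
Ltac T_known ::= first [apply tot_add | apply tot_pred | apply tot_sub | apply tot_isz | apply tot_sg | apply tot_eq | apply tot_T | apply tot_tonat | apply tot_q | apply tot_p | apply tot_rc | apply tot_test].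

Fixpoint sumf (f : nat -> nat) (m : nat) : nat := match m with 0 => 0 | S k => sumf f k + f k end.

Lemma sumf_pos f m : sumf f m <> 0 <-> exists k, k < m /\ f k <> 0.
Proof.
  induction m; simpl.
  - split; [lia|]. intros [k [H _]]; lia.
  - split.
    + intros H. destruct (f m) eqn:E.
      * rewrite Nat.add_0_r in H. apply IHm in H. destruct H as [k [Hk Hf]]. exists k; split; auto.
      * exists m; split; [lia|]; rewrite E; lia.
    + intros [k [Hk Hf]]. destruct (Nat.eq_dec k m) as [->|Hne]; [lia|].
      assert (sumf f m <> 0) by (apply IHm; exists k; split; [lia|auto]). lia.
Qed.

Definition P_sumlen := PPrim PZero (PComp P_add [PProj 1; PComp P_test [PProj 2; PProj 0]]).
Lemma tot_sumlen o : tot o 2 P_sumlen (fun v => sumf (fun k => tst o (nth 1 v 0) k) (nth 0 v 0)).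
Proof.
  eapply tot_ext; [T|]. intros v Hv. destruct v as [|m [|i [|]]]; try discriminate.
  simpl. clear Hv; induction m; simpl; auto.
Qed.
Ltac T_known ::= first [apply tot_add | apply tot_pred | apply tot_sub | apply tot_isz | apply tot_sg | apply tot_eq | apply tot_T | apply tot_tonat | apply tot_q | apply tot_p | apply tot_rc | apply tot_test | apply tot_sumlen].

Definition P_sum2 := PPrim PZero (PComp P_add [PProj 1; PComp P_sumlen [PProj 2; PProj 0]]).
Lemma tot_sum2 o : tot o 2 P_sum2 (fun v => sumf (fun i => sumf (fun k => tst o i k) (nth 1 v 0)) (nth 0 v 0)).
Proof.
  eapply tot_ext; [T|]. intros v Hv. destruct v as [|m [|N [|]]]; try discriminate.
  simpl. clear Hv; induction m; simpl; auto.
Qed.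
Ltac T_known ::= first [apply tot_add | apply tot_pred | apply tot_sub | apply tot_isz | apply tot_sg | apply tot_eq | apply tot_T | apply tot_tonat | apply tot_q | apply tot_p | apply tot_rc | apply tot_test | apply tot_sumlen | apply tot_sum2].

Definition H1val (o : Baire) (n : nat) : nat :=
  if Nat.eqb (sumf (fun i => sumf (fun k => tst o i k) (S n)) (S n)) 0 then 0 else 1.

Definition P_H1 := PComp P_sg [PComp P_sum2 [PComp PSucc [PProj 0]; PComp PSucc [PProj 0]]].
Lemma tot_H1 o : tot o 1 P_H1 (fun v => H1val o (nth 0 v 0)).
Proof. eapply tot_ext; [T|]. intros v Hv. reflexivity. Qed.

Lemma computes_of_tot o e F : tot o 1 e F -> computes e o (fun n => F [n]).
Proof. intros H n. apply H. reflexivity. Qed.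

Definition P_K2 := PComp (PPrim (PComp PSucc [PComp PSucc [PComp P_T [PComp PSucc [PProj 0]]]])
                                (PComp PSucc [PComp PSucc [PZero]]))
                         [PComp POracle [PProj 0]; PProj 0].
Definition K2val (o : Baire) (n : nat) : nat := if Nat.eqb (o n) 0 then S (S (tri (S n))) else 2.
Lemma tot_K2 o : tot o 1 P_K2 (fun v => K2val o (nth 0 v 0)).
Proof.
  eapply tot_ext; [T|]. intros v Hv. unfold K2val. simpl. destruct (o (nth 0 v 0)); reflexivity.
Qed.

Definition P_H2 := PComp P_sg [PComp POracle [PComp PSucc [PZero]]].
Lemma tot_H2 o : tot o 1 P_H2 (fun v => if Nat.eqb (o 1) 0 then 0 else 1).
Proof. eapply tot_ext; [T|]. intros v Hv. reflexivity. Qed.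

Lemma computes_id p : computes POracle p p.
Proof. intros n. constructor. Qed.

Lemma bpair_even p q j : bpair p q (j + j) = p j.
Proof.
  unfold bpair. replace (j + j) with (2 * j) by lia. rewrite Nat.even_mul, Nat.div2_double. reflexivity.
Qed.
Lemma bpair_odd p q j : bpair p q (S (j + j)) = q j.
Proof.
  unfold bpair. replace (S (j + j)) with (S (2 * j)) by lia. rewrite Nat.even_succ, Nat.odd_mul, Nat.div2_succ_double. reflexivity.
Qed.


Lemma rcf_ext f g len i : (forall j, f j = g j) -> rcf f len i = rcf g len i.
Proof. intros E; induction i; simpl; auto; rewrite E, IHi; auto. Qed.

Lemma rcf_code_gen q len i : i <= len -> rcf q len i = code (map q (seq (len - i) i)).
Proof.
  induction i; intros Hi; [reflexivity|].
  cbn [rcf]. rewrite IHi by lia. replace (len - i) with (S (len - S i)) by lia. reflexivity.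
Qed.

Lemma rcf_code q len : rcf q len len = code (pref q len).
Proof. rewrite rcf_code_gen by lia. rewrite Nat.sub_diag. reflexivity. Qed.

Lemma tst_iff p q i len : tst (bpair p q) i len <> 0 <-> p i = S (code (pref q len)).
Proof.
  unfold tst. rewrite bpair_even.
  rewrite (rcf_ext _ q) by (intros j; apply bpair_odd). rewrite rcf_code.
  destruct (Nat.eqb_spec (p i) (S (code (pref q len)))); split; intros; auto; try lia; contradiction.
Qed.

Lemma H1_correct p q : (exists n, H1val (bpair p q) n <> 0) <-> exists i, basic (p i) q.
Proof.
  split.
  - intros [n Hn]. unfold H1val in Hn. destruct (Nat.eqb _ 0) eqn:E; [lia|]. apply Nat.eqb_neq in E.
    apply sumf_pos in E. destruct E as [i [_ Hi]]. apply sumf_pos in Hi. destruct Hi as [len [_ Hl]].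
    apply tst_iff in Hl. exists i. rewrite Hl. apply basic_S_iff. eauto.
  - intros [i Hi]. destruct (p i) as [|m] eqn:E; [destruct Hi|].
    apply basic_S_iff in Hi. destruct Hi as [len Hlen].
    exists (i + len). unfold H1val.
    destruct (Nat.eqb _ 0) eqn:E2; [|lia]. apply Nat.eqb_eq in E2.
    exfalso. revert E2. apply sumf_pos. exists i. split; [lia|].
    apply sumf_pos. exists len. split; [lia|]. apply tst_iff. congruence.
Qed.

Lemma H1_01 o n : H1val o n = 0 \/ H1val o n = 1.
Proof. unfold H1val. destruct Nat.eqb; auto. Qed.

Theorem part1a : Wred WFT_S (ptot C_Baire).
Proof.
  exists P_H1, POracle. intros G HG p x Hx Hdom.
  simpl in Hx.
  assert (Hd : pdom (ptot C_Baire) x).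
  { destruct (classic (exists z, x z)) as [[z Hz]|Hn].
    - exists z. left. exact Hz.
    - exists (fun _ => 0). right. intros [z Hz]. apply Hn; eauto. }
  destruct (HG p x Hx Hd) as [q [Gq [y [Hy Hxy]]]]. simpl in Hy. subst y.
  exists p, q, (fun n => H1val (bpair p q) n). split; [apply computes_id|]. split; [exact Gq|]. split.
  { exact (computes_of_tot _ _ _ (tot_H1 (bpair p q))). }
  destruct (classic (forall z, ~ x z)) as [He|Hne].
  - exists true. simpl. split; [|split; auto].
    apply H1_correct. apply NNPP. intros Hn. apply (He q). rewrite Hx. intros n Hb. apply Hn. eauto.
  - exists false. simpl. split.
    + intros n. destruct (H1_01 (bpair p q) n) as [E|E]; auto. exfalso.
      assert (Hq : x q).
      { destruct Hxy as [H|H]; auto. exfalso. apply Hne. intros z Hz. apply H. exists z. exact Hz. }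
      rewrite Hx in Hq. destruct (proj1 (H1_correct p q)) as [i Hi]. { exists n. lia. }
      apply (Hq i Hi).
    + split; intros H; [discriminate|]. contradiction.
Qed.

Definition g0 : problem SierpS TwoS := fun b c => c = b.

Lemma basic_K2 p n z : basic (K2val p n) z <-> (if Nat.eqb (p n) 0 then z 0 = S n else z 0 = 0).
Proof.
  unfold K2val. destruct (Nat.eqb (p n) 0).
  - change (S (S (tri (S n)))) with (S (code [S n])). rewrite basic_S_iff.
    split.
    + intros [len Hl]. pose proof (f_equal decode Hl) as Hd. rewrite !decode_code in Hd.
      destruct len; [discriminate|]. simpl in Hd. injection Hd; auto.
    + intros Hz. exists 1. unfold pref. simpl. rewrite Hz. reflexivity.
  - change 2 with (S (code [0])). rewrite basic_S_iff.
    split.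
    + intros [len Hl]. pose proof (f_equal decode Hl) as Hd. rewrite !decode_code in Hd.
      destruct len; [discriminate|]. simpl in Hd. injection Hd; auto.
    + intros Hz. exists 1. unfold pref. simpl. rewrite Hz. reflexivity.
Qed.

Lemma red_g0 : Wred g0 C_Baire.
Proof.
  exists P_H2, P_K2. intros G HG p x Hx Hdom.
  set (k := fun n => K2val p n).
  set (Ak := fun z : Baire => forall n, ~ basic (k n) z).
  assert (Hne : pdom C_Baire Ak).
  { simpl in Hx. destruct x.
    - destruct Hx as [m Hm]. exists (fun i => if Nat.eqb i 0 then S m else 0).
      intros n Hb. unfold k in Hb. apply basic_K2 in Hb. simpl in Hb.
      destruct (Nat.eqb_spec (p n) 0); [|discriminate]. injection Hb as ->. contradiction.
    - exists (fun _ => 0). intros n Hb. unfold k in Hb. apply basic_K2 in Hb.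
      rewrite Hx in Hb. simpl in Hb. discriminate. }
  destruct (HG k Ak eq_refl Hne) as [q [Gq [y [Hy Hxy]]]]. simpl in Hy. subst y.
  exists k, q, (fun n => if Nat.eqb (bpair p q 1) 0 then 0 else 1).
  split; [exact (computes_of_tot _ _ _ (tot_K2 p))|]. split; [exact Gq|]. split.
  { exact (computes_of_tot _ _ _ (tot_H2 (bpair p q))). }
  exists x. split; [|reflexivity]. simpl.
  change 1 with (S (0 + 0)). rewrite bpair_odd.
  unfold C_Baire, Ak in Hxy. simpl in Hx. destruct x.
  - destruct Hx as [m Hm]. specialize (Hxy m). unfold k in Hxy. rewrite basic_K2 in Hxy.
    destruct (Nat.eqb_spec (p m) 0); [contradiction|].
    destruct (Nat.eqb_spec (q 0) 0); [contradiction|reflexivity].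
  - destruct (Nat.eqb_spec (q 0) 0); [reflexivity|]. exfalso.
    destruct (q 0) as [|m] eqn:E; [contradiction|].
    apply (Hxy m). unfold k. rewrite basic_K2. rewrite Hx. simpl. exact E.
Qed.

Lemma red_comp : Wred WFT (pcomp g0 WFT_S).
Proof.
  exists P_q, POracle. intros G HG p x Hx Hdom.
  assert (Hd : pdom (pcomp g0 WFT_S) x).
  { destruct (classic (forall z, ~ x z)) as [He|Hn].
    - exists true. split; [exists true; split; auto|]. split.
      + intros y _. exists y. reflexivity.
      + exists true. split; [split; auto|reflexivity].
    - exists false. split; [exists false; split; intros; [discriminate|contradiction]|]. split.
      + intros y _. exists y. reflexivity.
      + exists false. split; [split; intros; [discriminate|contradiction]|reflexivity]. }
  destruct (HG p x Hx Hd) as [q [Gq [c [Hc Hxc]]]].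
  exists p, q, q. split; [apply computes_id|]. split; [exact Gq|]. split.
  - intros n. pose proof (tot_q (bpair p q) [n] eq_refl) as H. simpl in H. rewrite bpair_odd in H. exact H.
  - exists c. split; [exact Hc|]. destruct Hxc as [_ [_ [y [Hy Hg]]]]. unfold g0 in Hg. subst c. exact Hy.
Qed.

Theorem part2a : Wred_cprod WFT C_Baire (ptot C_Baire).
Proof.
  exists ClosedS, SierpS, TwoS, g0, WFT_S. split; [exact red_g0|]. split; [exact part1a|exact red_comp].
Qed.


Definition choose (P : Baire -> Prop) : Baire := epsilon (inhabits (fun _ : nat => 0)) P.
Lemma choose_spec P : (exists x, P x) -> P (choose P).
Proof. intros H. unfold choose. apply epsilon_spec. exact H. Qed.

Lemma div2_le i : Nat.div2 i <= i.
Proof. apply Nat.div2_decr. lia. Qed.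

Lemma agree_bpair p p' q q' b : agree p p' b -> agree q q' b -> agree (bpair p q) (bpair p' q') b.
Proof.
  intros H1 H2 i Hi. unfold bpair. pose proof (div2_le i).
  destruct (Nat.even i); [apply H1|apply H2]; lia.
Qed.

Lemma prefix_agree x y b : prefix_of (pref x b) y 0 -> agree x y b.
Proof.
  rewrite prefix_of_iff, pref_length. intros H i Hi. specialize (H i Hi). simpl in H. rewrite H.
  unfold pref. rewrite (nth_indep (map x (seq 0 b)) 0 (x 0)) by (rewrite length_map, length_seq; lia).
  rewrite map_nth, seq_nth by lia. reflexivity.
Qed.

Lemma prefix_pref x b : prefix_of (pref x b) x 0.
Proof. apply prefix_of_pref_iff. rewrite pref_length. reflexivity. Qed.

Lemma computes_eval e p k n : computes e p k -> eval p e [n] (k n).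
Proof. intros H; apply H. Qed.

Definition ClosedOf (k : Baire) : Baire -> Prop := fun z => forall n, ~ basic (k n) z.

Section Part2b.
Variables eH eK : prog.

Definition UPhi (o : Baire) (b : nat) (w : list nat) : Prop :=
  forall o' x, agree o o' b -> prefix_of w x 0 -> eval (bpair o' x) eH [0] 0.
Definition KPhi (o : Baire) (b j v : nat) : Prop :=
  forall o', agree o o' b -> eval o' eK [j] v.
Definition Psi2 (o : Baire) (b : nat) (w : list nat) : Prop :=
  (exists w0, UPhi o b w0) /\ ((exists j t, KPhi o b j (S t) /\ w = decode t) \/ UPhi o b w).

Lemma UPhi_inv o o2 b w : agree o o2 b -> UPhi o b w -> UPhi o2 b w.
Proof. intros Ha H o' x Ha' Hp. apply H; auto. eapply agree_trans; eauto. Qed.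
Lemma KPhi_inv o o2 b j v : agree o o2 b -> KPhi o b j v -> KPhi o2 b j v.
Proof. intros Ha H o' Ha'. apply H; auto. eapply agree_trans; eauto. Qed.
Lemma Psi2_inv o o2 b w : agree o o2 b -> Psi2 o b w -> Psi2 o2 b w.
Proof.
  intros Ha [[w0 H0] H]. split; [exists w0; eapply UPhi_inv; eauto|].
  destruct H as [[j [t [Hk Hw]]]|Hu]; [left; exists j, t; split; auto; eapply KPhi_inv; eauto|right; eapply UPhi_inv; eauto].
Qed.
Lemma UPhi_mono o b b' w : b <= b' -> UPhi o b w -> UPhi o b' w.
Proof. intros Hb H o' x Ha Hp. apply H; auto. eapply agree_mono; eauto. Qed.
Lemma KPhi_mono o b b' j v : b <= b' -> KPhi o b j v -> KPhi o b' j v.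
Proof. intros Hb H o' Ha. apply H; auto. eapply agree_mono; eauto. Qed.

Lemma UPhi_of p x : eval (bpair p x) eH [0] 0 -> exists b, UPhi p b (pref x b).
Proof.
  intros H. destruct (eval_cont _ _ _ _ H) as [b Hb]. exists b. intros o' y Ha Hp.
  apply Hb. apply agree_bpair; auto. apply prefix_agree; auto.
Qed.
Lemma UPhi_sound p b w x : UPhi p b w -> prefix_of w x 0 -> eval (bpair p x) eH [0] 0.
Proof. intros H Hp. apply H; auto. intros i _; reflexivity. Qed.

Lemma notWFT_TC_core :
  (exists eH' eK', eH' = eH /\ eK' = eK) ->
  ~ (forall G : Baire -> option Baire, realizes G (ptot C_Baire) ->
      forall p x, rs_delta ClosedS p x -> pdom WFT x ->
        exists k q r,
          computes eK p k /\ G k = Some q /\ computes eH (bpair p q) r /\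
          exists y, rs_delta TwoS r y /\ WFT x y).
Proof.
  intros _ HW.
  destruct (fixpoint_exists Psi2 Psi2_inv) as [p Hp].
  set (U := fun x => eval (bpair p x) eH [0] 0).
  set (Pr := fun (k : Baire) x => (ClosedOf k x /\ ~ U x) \/ (~ (exists y, ClosedOf k y /\ ~ U y) /\ ClosedOf k x)
                        \/ (~ (exists y, ClosedOf k y) /\ U x)).
  set (G := fun k => Some (choose (Pr k))).
  assert (HG : realizes G (ptot C_Baire)).
  { intros k A HA _. simpl in HA. exists (choose (Pr k)). split; [reflexivity|].
    exists (choose (Pr k)). split; [reflexivity|].
    destruct (classic (exists y, ClosedOf k y)) as [[y Hy]|Hn].
    - left. simpl. rewrite HA.
      assert (Hs : exists x, Pr k x).
      { destruct (classic (exists y, ClosedOf k y /\ ~ U y)) as [[y' Hy']|Hn'].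
        - exists y'; left; auto.
        - exists y; right; left; auto. }
      destruct (choose_spec _ Hs) as [[H _]|[[_ H]|[H _]]]; auto. exfalso; eauto.
    - right. intros [z Hz]. simpl in Hz. apply Hn. exists z. subst A. exact Hz. }
  set (A := ClosedOf p).
  assert (HdA : pdom WFT A).
  { destruct (classic (forall z, ~ A z)) as [H|H].
    - exists true. split; intros; auto.
    - exists false. split; intros H'; [discriminate|contradiction]. }
  destruct (HW G HG p A eq_refl HdA) as [k [q [r [Hk [Gq [Hr [y [Hy HWy]]]]]]]].
  unfold G in Gq. injection Gq as Gq.
  assert (HrU : U q <-> r 0 = 0).
  { unfold U. split; intros H.
    - symmetry. eapply eval_det_all; [exact H|]. apply Hr.
    - pose proof (Hr 0) as E. rewrite H in E. exact E. }
  simpl in Hy. unfold WFT in HWy.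
  assert (HA1 : forall z, A z <-> ~ exists b w, Psi2 p b w /\ prefix_of w z 0) by (intros; apply Hp).
  destruct (classic (exists x0, U x0)) as [[x0 Hx0]|HU].
  2: {
    assert (HAall : forall z, A z).
    { intros z. apply HA1. intros [b [w [[[w0 H0] _] _]]]. apply HU.
      exists (fun i => nth i w0 0). eapply UPhi_sound; eauto.
      apply prefix_of_iff. intros j _. reflexivity. }
    destruct y.
    - exfalso. apply (proj1 HWy eq_refl q). apply HAall.
    - apply HU. exists q. apply HrU. exact Hy. }
  destruct (UPhi_of p x0 Hx0) as [b0 Hb0].
  assert (HAc : forall z, A z <-> ClosedOf k z /\ ~ U z).
  { intros z. rewrite HA1. split.
    - intros Hn. split.
      + intros n Hb. destruct (k n) as [|t] eqn:Ek; [destruct Hb|].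
        pose proof (computes_eval _ _ _ n Hk) as Hev. rewrite Ek in Hev.
        destruct (eval_cont _ _ _ _ Hev) as [b1 Hb1].
        apply Hn. exists (b0 + b1), (decode t). split.
        * split; [exists (pref x0 b0); eapply UPhi_mono; [|eauto]; lia|].
          left. exists n, t. split; auto. intros o' Ha. apply Hb1. eapply agree_mono; [|eauto]; lia.
        * exact Hb.
      + intros Hz. destruct (UPhi_of p z Hz) as [b2 Hb2]. apply Hn.
        exists (b0 + b2), (pref z b2). split; [|apply prefix_pref].
        split; [exists (pref x0 b0); eapply UPhi_mono; [|eauto]; lia|].
        right. eapply UPhi_mono; [|eauto]; lia.
    - intros [Hc Hu] [b [w [[_ [[j [t [Hkj Hw]]]|Hu']] Hpw]]].
      + subst w. assert (Ev : eval p eK [j] (S t)) by (apply Hkj; intros i _; reflexivity).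
        pose proof (eval_det_all _ _ _ _ Ev _ (computes_eval _ _ _ j Hk)) as E.
        apply (Hc j). rewrite <- E. exact Hpw.
      + apply Hu. eapply UPhi_sound; eauto. }
  assert (Hq : Pr k q).
  { rewrite <- Gq. apply choose_spec.
    destruct (classic (exists y, ClosedOf k y /\ ~ U y)) as [[y' Hy']|Hn'].
    - exists y'; left; auto.
    - destruct (classic (exists y, ClosedOf k y)) as [[y' Hy']|Hn''].
      + exists y'; right; left; auto.
      + exists x0; right; right; auto. }
  destruct Hq as [[Hc Hu]|[[Hn Hc]|[Hn Hu]]].
  -
    destruct y.
    + apply (proj1 HWy eq_refl q). apply HAc; auto.
    + apply Hu. apply HrU. exact Hy.
  - destruct (classic (U q)) as [Hu|Hu]; [|apply Hn; eauto].
    destruct y.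
    + apply HrU in Hu. rewrite Hu in Hy. discriminate.
    + assert (Hne : ~ forall z, ~ A z) by (intros H; apply (proj2 HWy) in H; discriminate).
      apply Hne. intros z Hz. apply HAc in Hz. apply Hn. exists z. exact Hz.
  - destruct y.
    + apply HrU in Hu. rewrite Hu in Hy. discriminate.
    + assert (Hne : ~ forall z, ~ A z) by (intros H; apply (proj2 HWy) in H; discriminate).
      apply Hne. intros z Hz. apply HAc in Hz. apply Hn. exists z. apply Hz.
Qed.
End Part2b.

Theorem part2b : ~ Wred WFT (ptot C_Baire).
Proof.
  intros [eH [eK HW]]. apply (notWFT_TC_core eH eK); [eauto|exact HW].
Qed.


Definition shiftN (N : nat) (x : Baire) : Baire := fun i => if i <? N then 0 else S (x (i - N)).
Definition zero : Baire := fun _ => 0.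
Definition drop4 (z : Baire) : Baire := fun i => z (4 + i).
Definition ClosedM (k : Baire) : Baire -> Prop := fun x => forall j, k j <> 0 -> ~ basic (k j - 1) x.

Lemma minus1_shift N x : minus1 (shiftN N x) x.
Proof.
  exists (fun k => N + k). split; [intros; lia|]. split.
  - intros n. unfold shiftN. destruct (Nat.ltb_spec n N).
    + split; [intros H'; exfalso; apply H'; reflexivity|]. intros [k Hk]. lia.
    + split; [intros _; exists (n - N); lia|intros _; discriminate].
  - intros k. unfold shiftN. destruct (Nat.ltb_spec (N + k) N); [lia|]. replace (N + k - N) with k by lia. simpl. lia.
Qed.

Lemma minus1_zero q : ~ minus1 zero q.
Proof. intros [s [_ [H _]]]. apply (proj2 (H (s 0))). eauto. reflexivity. Qed.

Lemma ClosedM_minus1 k k' x : minus1 k k' -> (ClosedM k x <-> ClosedOf k' x).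
Proof.
  intros [s [Hs [Hn Hk]]]. unfold ClosedM, ClosedOf. split.
  - intros H i. rewrite Hk. apply H. apply Hn. eauto.
  - intros H j Hj. apply Hn in Hj. destruct Hj as [i <-]. rewrite <- Hk. apply H.
Qed.

Lemma prefix_shift w z i j : prefix_of w z (i + j) <-> prefix_of w (fun t => z (i + t)) j.
Proof.
  revert j; induction w as [|a w IH]; intros j; simpl; [tauto|].
  replace (S (i + j)) with (i + S j) by lia. rewrite IH. tauto.
Qed.

Lemma agree_ext_pref x b : agree x (ext (pref x b)) b.
Proof. apply prefix_agree. apply prefix_of_iff. intros j _. reflexivity. Qed.

Lemma agree_shiftN N x x' b : agree x x' b -> agree (shiftN N x) (shiftN N x') b.
Proof. intros H i Hi. unfold shiftN. destruct (i <? N); auto. f_equal. apply H. lia. Qed.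

Lemma agree_zero_shift b x : agree zero (shiftN b x) b.
Proof. intros i Hi. unfold shiftN, zero. destruct (Nat.ltb_spec i b); lia. Qed.

Section Part1b.
Variables eH eK : prog.

Definition XPhi (o : Baire) (b n v : nat) : Prop :=
  forall o' q', agree o o' b -> agree zero q' b -> eval (bpair o' q') eH [n] v.
Definition YPhi (o : Baire) (b N n : nat) (x : Baire) (v : nat) : Prop :=
  forall o' q', agree o o' b -> agree (shiftN N x) q' b -> eval (bpair o' q') eH [n] v.

Definition Psi1 (o : Baire) (B : nat) (w : list nat) : Prop :=
  (exists c, 2 <= c /\ w = [c])
  \/ (exists n b, b <= B /\ w = [0; n; b] /\ ~ exists v, v <> 0 /\ XPhi o b n v)
  \/ (exists N n b u, b <= B /\ length u = b /\ w = [1; N; n; b] ++ u /\ ~ exists v, v <> 0 /\ YPhi o b N n (ext u) v)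
  \/ (exists N n b j t, KPhi eK o B j (S (S t)) /\ w = [1; N; n; b] ++ decode t).

Lemma XPhi_inv o o2 b n v : agree o o2 b -> XPhi o b n v -> XPhi o2 b n v.
Proof. intros Ha H o' q' H1 H2. apply H; auto. eapply agree_trans; eauto. Qed.
Lemma YPhi_inv o o2 b N n x v : agree o o2 b -> YPhi o b N n x v -> YPhi o2 b N n x v.
Proof. intros Ha H o' q' H1 H2. apply H; auto. eapply agree_trans; eauto. Qed.
Lemma YPhi_x o b N n x x' v : agree x x' b -> YPhi o b N n x v -> YPhi o b N n x' v.
Proof. intros Ha H o' q' H1 H2. apply H; auto. eapply agree_trans; [|eauto]. apply agree_shiftN; auto. Qed.

Lemma Psi1_inv o o2 B w : agree o o2 B -> Psi1 o B w -> Psi1 o2 B w.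
Proof.
  intros Ha [H|[H|[H|H]]].
  - left; auto.
  - right; left. destruct H as [n [b [Hb [Hw Hn]]]]. exists n, b. split; auto. split; auto.
    intros [v [Hv HX]]. apply Hn. exists v. split; auto. eapply XPhi_inv; [|eauto].
    apply agree_sym. eapply agree_mono; eauto.
  - right; right; left. destruct H as [N [n [b [u [Hb [Hu [Hw Hn]]]]]]]. exists N, n, b, u.
    repeat split; auto. intros [v [Hv HY]]. apply Hn. exists v. split; auto. eapply YPhi_inv; [|eauto].
    apply agree_sym. eapply agree_mono; eauto.
  - right; right; right. destruct H as [N [n [b [j [t [Hk Hw]]]]]]. exists N, n, b, j, t. split; auto.
    eapply KPhi_inv; eauto.
Qed.

Definition Bad (p q : Baire) : Prop := exists n v, v <> 0 /\ eval (bpair p q) eH [n] v.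

Lemma notWFTS_core :
  ~ (forall G : Baire -> option Baire, realizes G (pbar C_Baire) ->
      forall p x, rs_delta ClosedS p x -> pdom WFT_S x ->
        exists k q r,
          computes eK p k /\ G k = Some q /\ computes eH (bpair p q) r /\
          exists y, rs_delta SierpS r y /\ WFT_S x y).
Proof.
  intros HW.
  destruct (fixpoint_exists Psi1 Psi1_inv) as [p Hp].
  set (Q' := fun (k q : Baire) => (exists N x, ClosedM k x /\ q = shiftN N x) \/ (q = zero /\ forall x, ~ ClosedM k x)).
  set (Pr := fun k q => Q' k q /\ (Bad p q \/ ~ exists q', Q' k q' /\ Bad p q')).
  set (G := fun k => Some (choose (Pr k))).
  assert (HQne : forall k, exists q, Q' k q).
  { intros k. destruct (classic (exists x, ClosedM k x)) as [[x Hx]|Hn].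
    - exists (shiftN 0 x). left. eauto.
    - exists zero. right. split; auto. intros x Hx; apply Hn; eauto. }
  assert (HPr : forall k, Pr k (choose (Pr k))).
  { intros k. apply choose_spec. destruct (classic (exists q', Q' k q' /\ Bad p q')) as [[q' [H1 H2]]|Hn].
    - exists q'. split; auto.
    - destruct (HQne k) as [q Hq]. exists q. split; auto. }
  assert (HG : realizes G (pbar C_Baire)).
  { intros k ox Hox _. exists (choose (Pr k)). split; [reflexivity|].
    destruct (HPr k) as [HQ _]. set (q := choose (Pr k)) in *.
    destruct ox as [A'|].
    - simpl in Hox. destruct Hox as [k' [Hm HA']].
      destruct HQ as [[N [x [Hx Hq]]]|[Hq Hn]].
      + exists (Some x). split.
        * simpl. exists x. split; auto. rewrite Hq. apply minus1_shift.
        * simpl. left. unfold C_Baire. rewrite HA'. apply (ClosedM_minus1 k k' x Hm). exact Hx.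
      + exists None. split.
        * simpl. intros [q0 [x0 [Hm0 _]]]. rewrite Hq in Hm0. apply (minus1_zero q0 Hm0).
        * simpl. intros [z Hz]. unfold C_Baire in Hz. rewrite HA' in Hz.
          apply (Hn z). apply (ClosedM_minus1 k k' z Hm). exact Hz.
    - destruct (classic (exists y', minus1 q y')) as [[y' Hy']|Hn].
      + exists (Some y'). split; [simpl; exists y'; split; auto|exact I].
      + exists None. split; [|exact I]. simpl. intros [q0 [x0 [Hm0 _]]]. apply Hn; eauto. }
  set (A := ClosedOf p).
  assert (HdA : pdom WFT_S A).
  { destruct (classic (forall z, ~ A z)) as [H|H].
    - exists true. split; intros; auto.
    - exists false. split; intros H'; [discriminate|contradiction]. }
  destruct (HW G HG p A eq_refl HdA) as [k [q [r [Hk [Gq [Hr [y [Hy HWy]]]]]]]].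
  unfold G in Gq. injection Gq as Gq.
  assert (HPq : Pr k q) by (rewrite <- Gq; apply HPr).
  assert (HAin : forall z,
    (z 0 = 0 /\ exists v, v <> 0 /\ XPhi p (z 2) (z 1) v) \/
    (z 0 = 1 /\ ClosedM k (drop4 z) /\ exists v, v <> 0 /\ YPhi p (z 3) (z 1) (z 2) (drop4 z) v) -> A z).
  { intros z Hz. unfold A, ClosedOf. apply (proj2 (Hp z)). intros [B [w [HP Hw]]].
    destruct HP as [[c [Hc ->]]|[[n [b [Hb [-> Hn]]]]|[[N [n [b [u [Hb [Hu [-> Hn]]]]]]]|[N [n [b [j [t [HK ->]]]]]]]]].
    - simpl in Hw. destruct Hw as [Hw _]. destruct Hz as [[H _]|[H _]]; lia.
    - simpl in Hw. destruct Hw as [H0 [H1 [H2 _]]].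
      destruct Hz as [[_ [v [Hv HX]]]|[H _]]; [|lia]. apply Hn. exists v. rewrite <- H1, <- H2. auto.
    - simpl in Hw. destruct Hw as [H0 [H1 [H2 [H3 Hu']]]].
      destruct Hz as [[H _]|[_ [_ [v [Hv HY]]]]]; [lia|]. apply Hn. exists v. split; auto.
      rewrite <- H1, <- H2, <- H3. eapply YPhi_x; [|eauto]. rewrite H3.
      change 4 with (4 + 0) in Hu'. rewrite prefix_shift in Hu'. rewrite <- Hu.
      intros i Hi. apply prefix_of_iff with (j := i) in Hu'; auto; try lia.
    - simpl in Hw. destruct Hw as [H0 [H1 [H2 [H3 Hu']]]].
      destruct Hz as [[H _]|[_ [HC _]]]; [lia|].
      assert (Ev : eval p eK [j] (S (S t))) by (apply HK; intros i _; reflexivity).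
      pose proof (eval_det_all _ _ _ _ Ev _ (computes_eval _ _ _ j Hk)) as E.
      apply (HC j); [lia|]. rewrite <- E. simpl. try rewrite Nat.sub_0_r.
      change 4 with (4 + 0) in Hu'. rewrite prefix_shift in Hu'. exact Hu'. }
  assert (HAout : forall z, A z ->
    (z 0 = 0 /\ exists v, v <> 0 /\ XPhi p (z 2) (z 1) v) \/
    (z 0 = 1 /\ ClosedM k (drop4 z) /\ exists v, v <> 0 /\ YPhi p (z 3) (z 1) (z 2) (drop4 z) v)).
  { intros z Hz. apply (proj1 (Hp z)) in Hz.
    destruct (z 0) as [|[|c]] eqn:E0.
    - left. split; auto. apply NNPP. intros Hn. apply Hz. exists (z 2), [0; z 1; z 2]. split.
      + right; left. exists (z 1), (z 2). auto.
      + simpl. auto.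
    - right. split; auto. split.
      + intros j Hj Hb. destruct (k j) as [|[|t]] eqn:Ek; [lia|destruct Hb|].
        pose proof (computes_eval _ _ _ j Hk) as Ev. rewrite Ek in Ev.
        destruct (eval_cont _ _ _ _ Ev) as [b1 Hb1].
        apply Hz. exists b1, ([1; z 1; z 2; z 3] ++ decode t). split.
        * right; right; right. exists (z 1), (z 2), (z 3), j, t. split; auto.
        * simpl. repeat split; auto. change 4 with (4 + 0). rewrite prefix_shift. simpl in Hb.
          try rewrite Nat.sub_0_r in Hb. exact Hb.
      + apply NNPP. intros Hn. apply Hz. exists (z 3), ([1; z 1; z 2; z 3] ++ pref (drop4 z) (z 3)). split.
        * right; right; left. exists (z 1), (z 2), (z 3), (pref (drop4 z) (z 3)).
          split; auto. split; [apply pref_length|]. split; auto.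
          intros [v [Hv HY]]. apply Hn. exists v. split; auto. eapply YPhi_x; [|eauto].
          apply agree_sym, agree_ext_pref.
        * simpl. repeat split; auto. change 4 with (4 + 0). rewrite prefix_shift. apply prefix_pref.
    - exfalso. apply Hz. exists 0, [S (S c)]. split.
      + left. exists (S (S c)). split; [lia|auto].
      + simpl. auto. }
  assert (HrBad : Bad p q -> exists n, r n <> 0).
  { intros [n [v [Hv Ev]]]. exists n. pose proof (eval_det_all _ _ _ _ Ev _ (Hr n)). congruence. }
  destruct HPq as [HQ [HB|HnB]].
  - (* answer is 'empty' but A nonempty *)
    destruct (HrBad HB) as [n Hn].
    assert (Hyt : y = true).
    { destruct y; [reflexivity|]. simpl in Hy. exfalso; apply Hn; apply Hy. }
    subst y. pose proof (proj1 HWy eq_refl) as HE. destruct HB as [n' [v [Hv Ev]]].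
    destruct (eval_cont _ _ _ _ Ev) as [b Hb].
    destruct HQ as [[N [x [Hx ->]]]|[-> _]].
    + apply (HE (fun i => match i with 0 => 1 | 1 => N | 2 => n' | 3 => b | S (S (S (S i'))) => x i' end)).
      apply HAin. right. split; auto. split; [exact Hx|]. exists v. split; auto.
      intros o' q' H1 H2. apply Hb. apply agree_bpair; auto.
    + apply (HE (fun i => match i with 0 => 0 | 1 => n' | 2 => b | _ => 0 end)).
      apply HAin. left. split; auto. exists v. split; auto.
      intros o' q' H1 H2. apply Hb. apply agree_bpair; auto.
  - (* all of Q' are good: answer 'nonempty' *)
    assert (Hy0 : forall n, r n = 0).
    { intros n. destruct (r n) as [|v] eqn:E; auto. exfalso. apply HnB. exists q. split; auto.
      exists n, (S v). split; [lia|]. rewrite <- E. apply Hr. }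
    assert (Hyf : y = false).
    { destruct y; auto. simpl in Hy. destruct Hy as [n Hn]. exfalso; auto. }
    subst y. assert (Hne : ~ forall z, ~ A z) by (intros H; apply (proj2 HWy) in H; discriminate).
    apply Hne. intros z Hz. apply HAout in Hz.
    destruct Hz as [[_ [v [Hv HX]]]|[_ [HC [v [Hv HY]]]]].
    + destruct (classic (exists x, ClosedM k x)) as [[x Hx]|Hn].
      * apply HnB. exists (shiftN (z 2) x). split; [left; eauto|].
        exists (z 1), v. split; auto. apply HX; [intros i _; reflexivity|apply agree_zero_shift].
      * apply HnB. exists zero. split; [right; split; auto; intros x Hx; apply Hn; eauto|].
        exists (z 1), v. split; auto. apply HX; intros i _; reflexivity.
    + apply HnB. exists (shiftN (z 1) (drop4 z)). split; [left; eauto|].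
      exists (z 2), v. split; auto. apply HY; intros i _; reflexivity.
Qed.
End Part1b.

Theorem part1b : ~ Wred WFT_S (pbar C_Baire).
Proof.
  intros [eH [eK HW]]. apply (notWFTS_core eH eK). exact HW.
Qed.


Theorem proposition11p4 :
  (Wred WFT_S (ptot C_Baire) /\ ~ Wred WFT_S (pbar C_Baire)) /\
  (Wred_cprod WFT C_Baire (ptot C_Baire) /\ ~ Wred WFT (ptot C_Baire)).
Proof.
  split; split.
  - exact part1a.
  - exact part1b.
  - exact part2a.
  - exact part2b.
Qed.
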